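(* Let $k\ge 2$, let $B=M\cup\{\omega_1,\ldots,\omega_p\}$ with $p\ge 1$ and $\omega_1,\ldots,\omega_p\in P_k\setminus M$, and let $F$ be a finite system of functions from $P_k(n)$ (for some $n\ge 1$). Then $$d(F)\le (d(B)+1)^{I_B(F)}-1 .$$
   Context: Let $k\ge 2$ be an integer and $E_k=\{0,1,\ldots,k-1\}$. $P_k(n)$ denotes the set of all functions $E_k^n\to E_k$ ($k$-valued logic functions of $n$ arguments), and $P_k=\bigcup_n P_k(n)$. Tuples in $E_k^n$ are ordered componentwise: $\tilde\alpha\le\tilde\beta$ iff $\alpha_j\le\beta_j$ for all $j$. A function $f$ is monotone if $\tilde\alpha\le\tilde\beta$ implies $f(\tilde\alpha)\le f(\tilde\beta)$; $M$ is the set of all monotone functions in $P_k$ (of all arities, including constants). A basis is a set $B=M\cup\{\omega_1,\ldots,\omega_p\}$ with $p\ge1$ and $\omega_i\in P_k\setminus M$. A circuit over $B$ with inputs $x_1,\ldots,x_n$ is a finite directed acyclic graph whose source nodes are labelled by the variables $x_1,\ldots,x_n$ and each of whose other nodes (gates) is labelled by a $q$-ary function from $B$ and has $q$ ordered incoming edges; each node computes a function of $P_k(n)$ in the obvious way. A circuit realizes a system $F$ of functions of $x_1,\ldots,x_n$ if every function of $F$ is computed at some node. Gates labelled by functions of $M$ have weight $0$, gates labelled by some $\omega_i$ have weight $1$. The non-monotone complexity $I_B(S)$ of a circuit $S$ is the sum of the weights of its gates; $I_B(F)$ is the minimum of $I_B(S)$ over all circuits $S$ over $B$ realizing $F$,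 and $I_B(f)=I_B(\{f\})$. A chain is a sequence $\tilde\alpha_1,\ldots,\tilde\alpha_r$ of pairwise distinct tuples of $E_k^n$ with $\tilde\alpha_i\le\tilde\alpha_{i+1}$ for $i=1,\ldots,r-1$. A pair $(\tilde\alpha,\tilde\beta)$ with $\tilde\alpha\le\tilde\beta$ is a jump for a system $F$ if $f(\tilde\alpha)>f(\tilde\beta)$ for at least one $f\in F$. For a chain $C=(\tilde\alpha_1,\ldots,\tilde\alpha_r)$, the decrease $d_C(F)$ is the number of $i\in\{1,\ldots,r-1\}$ such that $(\tilde\alpha_i,\tilde\alpha_{i+1})$ is a jump for $F$. The decrease $d(F)$ is the maximum of $d_C(F)$ over all chains $C$ in $E_k^n$; $d(f)=d(\{f\})$. Finally $d(B)=\max\{d(\omega_1),\ldots,d(\omega_p)\}$. *)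

(* Defs.v *)
From Stdlib Require List.
From mathcomp Require Import all_boot.
Set Implicit Arguments.
Unset Strict Implicit.
Unset Printing Implicit Defensive.

(* E_k = 'I_k ; tuples of E_k^n are finite functions 'I_n -> 'I_k. *)
Definition tup (k n : nat) := {ffun 'I_n -> 'I_k}.

Definition le_tup (k n : nat) (a b : tup k n) : bool := [forall j, a j <= b j].

Definition mono (k q : nat) (g : tup k q -> 'I_k) : Prop :=
  forall a b : tup k q, le_tup a b -> g a <= g b.

Definition is_chain (k n : nat) (s : seq (tup k n)) : bool :=
  uniq s && sorted (@le_tup k n) s.

Definition is_jump (k n : nat) (F : seq (tup k n -> 'I_k)) (a b : tup k n) : bool :=
  has (fun f : tup k n -> 'I_k => f b < f a) F.

Definition decr (k n : nat) (F : seq (tup k n -> 'I_k)) (s : seq (tup k n)) : nat :=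
  count (fun p => is_jump F p.1 p.2) (zip s (behead s)).

(* d(F): maximum over all chains (a chain has at most #|E_k^n| elements) *)
Definition dsys (k n : nat) (F : seq (tup k n -> 'I_k)) : nat :=
  \max_(l < #|{: tup k n}|.+1) \max_(t : l.-tuple (tup k n) | is_chain t) decr F t.

(* a function of P_k of some arity (used for the omega_i) *)
Record kfun (k : nat) := KFun { kf_ar : nat; kf_fn : tup k kf_ar -> 'I_k }.
Arguments kf_fn {k} !k _ : rename.

Definition dB (k : nat) (B : seq (kfun k)) : nat :=
  \max_(w <- B) dsys [:: kf_fn w].

(* Circuits as topologically ordered straight-line programs.
   A gate at position m may use any of the m previous nodes
   (nodes 0..n-1 are the inputs x_1..x_n). *)
Inductive gate (k m : nat) : Type :=
| GMon (q : nat) (g : tup k q -> 'I_k) (args : 'I_q -> 'I_m)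
| GOm (w : kfun k) (args : 'I_(kf_ar w) -> 'I_m).

Inductive circuit (k n : nat) : nat -> Type :=
| CInit : circuit k n n
| CSnoc (m : nat) : circuit k n m -> gate k m -> circuit k n m.+1.

Definition gate_eval (k m : nat) (v : 'I_m -> 'I_k) (g : gate k m) : 'I_k :=
  match g with
  | GMon q f a => f [ffun j => v (a j)]
  | GOm w a => kf_fn w [ffun j => v (a j)]
  end.

Fixpoint circ_vals (k n m : nat) (C : circuit k n m) (x : tup k n) : 'I_m -> 'I_k :=
  match C in circuit _ _ m return 'I_m -> 'I_k with
  | CInit => fun i => x i
  | CSnoc m' C' g =>
      let v := circ_vals C' x in
      fun i : 'I_m'.+1 =>
        match unlift ord_max i with Some j => v j | None => gate_eval v g end
  end.

(* gates are labelled by functions of B = M ∪ {omega_1..omega_p} *)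
Definition gate_ok (k m : nat) (B : seq (kfun k)) (g : gate k m) : Prop :=
  match g with
  | GMon q f _ => mono f
  | GOm w _ => List.In w B
  end.

Fixpoint circ_ok (k n m : nat) (B : seq (kfun k)) (C : circuit k n m) : Prop :=
  match C with
  | CInit => True
  | CSnoc _ C' g => circ_ok B C' /\ gate_ok B g
  end.

(* non-monotone complexity: number of omega-gates *)
Fixpoint weight (k n m : nat) (C : circuit k n m) : nat :=
  match C with
  | CInit => 0
  | CSnoc _ C' g => weight C' + (if g is GOm _ _ then 1 else 0)
  end.

Definition realizes (k n m : nat) (C : circuit k n m) (F : seq (tup k n -> 'I_k)) : Prop :=
  forall f, List.In f F -> exists i : 'I_m, forall x, circ_vals C x i = f x.

Definition IB (k n : nat) (B : seq (kfun k)) (F : seq (tup k n -> 'I_k)) (i : nat) : Prop :=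
  (exists m (C : circuit k n m), [/\ circ_ok B C, realizes C F & weight C = i]) /\
  (forall m (C : circuit k n m), circ_ok B C -> realizes C F -> i <= weight C).

(* Main.v *)
Require Import Defs.
From mathcomp Require Import all_boot.
From mathcomp Require Import zify.

Set Implicit Arguments.
Unset Strict Implicit.
Unset Printing Implicit Defensive.

Fixpoint jc (T : Type) (P : rel T) (x : T) (s : seq T) : nat :=
  if s is y :: s' then P x y + jc P y s' else 0.

Lemma count_jc (T : Type) (P : rel T) x s :
  count (fun p => P p.1 p.2) (zip (x :: s) s) = jc P x s.
Proof. by elim: s x => [|y s IH] x //=; rewrite IH. Qed.

Lemma jc_mono (T : Type) (P Q : rel T) x s :
  (forall a b, P a b -> Q a b) -> jc P x s <= jc Q x s.
Proof.
move=> H; elim: s x => [|y s IH] x //=; apply: leq_add => //.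
by have := H x y; case: (P x y); case: (Q x y) => //= /(_ isT).
Qed.

Lemma jc_ext (T : Type) (P Q : rel T) x s :
  (forall a b, P a b = Q a b) -> jc P x s = jc Q x s.
Proof. by move=> H; elim: s x => [|y s IH] x //=; rewrite H IH. Qed.

Lemma jc_rcons (T : Type) (P : rel T) x0 r b :
  jc P x0 (rcons r b) = jc P x0 r + P (last x0 r) b.
Proof.
elim: r x0 => [|y r IH] x0 /=; first by rewrite addn0.
by rewrite IH addnA.
Qed.

Lemma jc0 (T : Type) (le P : rel T) x s :
  (forall a b, le a b -> ~~ P a b) -> path le x s -> jc P x s = 0.
Proof.
move=> H; elim: s x => [|y s IH] x //= /andP[Hxy Hp].
by rewrite (negbTE (H _ _ Hxy)) IH.
Qed.

Lemma seg (T U : Type) (leT : rel T) (leU : rel U) (P : rel T) (h : T -> U)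
  (f : U -> nat) (D : nat) :
 (forall a b, leT a b -> ~~ P a b -> leU (h a) (h b)) ->
 (forall x0 r, path leU x0 r -> jc (fun a b => f b < f a) x0 r <= D) ->
 forall s x x0 r, path leT x s -> path leU x0 r -> last x0 r = h x ->
 jc (fun a b => f b < f a) x0 r
   + (jc (fun a b => P a b || (f (h b) < f (h a))) x s).+1
   <= (jc P x s).+1 * D.+1.
Proof.
move=> Hm Hd; elim=> [|y s IH] x x0 r /= Hp Hr Hl.
  by rewrite mul1n addn1 ltnS; exact: Hd.
move/andP: Hp => [Hxy Hp]; case Pxy: (P x y) => /=.
  have := IH y (h y) [::] Hp isT erefl; rewrite /= add0n => H.
  have := Hd _ _ Hr; rewrite add1n mulSn; nia.
have Hu : leU (h x) (h y) by apply: Hm => //; rewrite Pxy.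
have := IH y x0 (rcons r (h y)) Hp.
rewrite rcons_path Hr Hl Hu last_rcons jc_rcons Hl => /(_ isT erefl).
rewrite add0n; lia.
Qed.

Section Dedup.
Variable T : eqType.
Fixpoint dd (x : T) (s : seq T) : seq T :=
  if s is y :: s' then (if y == x then dd x s' else y :: dd y s') else [::].

Variable le : rel T.
Hypothesis le_tr : transitive le.
Hypothesis le_anti : forall a b, le a b -> le b a -> a = b.
Definition slt : rel T := fun a b => (b != a) && le a b.

Lemma dd_path x s : path le x s -> path slt x (dd x s).
Proof.
elim: s x => [|y s IH] x //= /andP[Hxy Hp].
case: (y =P x) => [E|ne] /=; first by subst y; apply: IH.
by rewrite /slt Hxy andbT; apply/andP; split; [apply/eqP | apply: IH].
Qed.

Lemma dd_jc (P : rel T) x s : (forall a, P a a = false) -> jc P x (dd x s) = jc P x s.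
Proof.
move=> H; elim: s x => [|y s IH] x //=.
by case: (y =P x) => [E|_] /=; [subst y; rewrite H add0n IH | rewrite IH].
Qed.

Lemma slt_tr : transitive slt.
Proof.
move=> b a c /andP[ba ab] /andP[cb bc]; rewrite /slt (le_tr ab bc) andbT.
apply/eqP => ca; subst c; by move: ba; rewrite (le_anti ab bc) eqxx.
Qed.

Lemma slt_irr : irreflexive slt.
Proof. by move=> a; rewrite /slt eqxx. Qed.
End Dedup.

Lemma le_tup_tr k q : transitive (@le_tup k q).
Proof.
move=> b a c /forallP H1 /forallP H2; apply/forallP => j.
exact: leq_trans (H1 j) (H2 j).
Qed.

Lemma le_tup_anti k q (a b : tup k q) : le_tup a b -> le_tup b a -> a = b.
Proof.
move=> /forallP H1 /forallP H2; apply/ffunP => j; apply: val_inj.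
by apply/eqP; rewrite eqn_leq H1 H2.
Qed.

Lemma decr_jc k n (F : seq (tup k n -> 'I_k)) x s :
  decr F (x :: s) = jc (is_jump F) x s.
Proof. by rewrite /decr /= -count_jc. Qed.

Lemma chain_le_dsys k n (F : seq (tup k n -> 'I_k)) (t : seq (tup k n)) :
  is_chain t -> decr F t <= dsys F.
Proof.
move=> Hc.
have Hs : size t < #|{: tup k n}|.+1.
  rewrite ltnS; case/andP: Hc => /card_uniqP <- _; exact: max_card.
rewrite /dsys; apply: leq_trans (leq_bigmax (Ordinal Hs)).
exact: (@leq_bigmax_cond _ _ (fun t0 : (size t).-tuple (tup k n) => decr F t0) (in_tuple t) Hc).
Qed.

Lemma dd_dsys k q (g : tup k q -> 'I_k) x0 r :
  path (@le_tup k q) x0 r -> jc (fun a b => g b < g a) x0 r <= dsys [:: g].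
Proof.
move=> Hp.
have Hs := dd_path Hp.
rewrite -(@dd_jc _ (fun a b => g b < g a)); last by move=> a; rewrite ltnn.
have Hc : is_chain (x0 :: dd x0 r).
  apply/andP; split.
    apply: (sorted_uniq (@slt_tr _ _ (@le_tup_tr k q) (@le_tup_anti k q))).
      exact: slt_irr.
    exact: Hs.
  by apply: sub_path Hs => a b /andP[].
apply: leq_trans (chain_le_dsys [:: g] Hc).
rewrite decr_jc; apply: jc_mono => a b /=; by rewrite orbF.
Qed.

Lemma dB_ge k (B : seq (kfun k)) w : List.In w B -> dsys [:: kf_fn w] <= dB B.
Proof.
rewrite /dB; elim: B => [|w' B IH] //= [->|Hin]; rewrite big_cons.
  exact: leq_maxl.
exact: leq_trans (IH Hin) (leq_maxr _ _).
Qed.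

Definition cj k n m (C : circuit k n m) (a b : tup k n) : bool :=
  [exists i, circ_vals C b i < circ_vals C a i].

Lemma cj_snoc k n m (C : circuit k n m) g a b :
  cj (CSnoc C g) a b =
  cj C a b || (gate_eval (circ_vals C b) g < gate_eval (circ_vals C a) g).
Proof.
apply/existsP/orP.
  case=> i; case: (unliftP ord_max i) => [j ->|->] /=;
    rewrite ?liftK ?unlift_none => Hj; [left; apply/existsP; exists j | right] => //.
case=> [/existsP [j Hj] | Hg]; [exists (lift ord_max j) | exists ord_max];
  by rewrite /= ?liftK ?unlift_none.
Qed.

Lemma main k n (B : seq (kfun k)) m (C : circuit k n m) :
  circ_ok B C -> forall x s, path (@le_tup k n) x s ->
  (jc (cj C) x s).+1 <= (dB B).+1 ^ weight C.
Proof.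
elim: C => [|m' C IH g] /=.
  move=> _ x s Hp; rewrite (@jc0 _ (@le_tup k n)) //.
  move=> a b /forallP H; apply/existsPn => i /=; rewrite -leqNgt; exact: H.
case=> okC okg x s Hp.
case: g okg => [q f args | w args] /= okg.
  rewrite addn0; apply: leq_trans (IH okC x s Hp); rewrite ltnS.
  apply: jc_mono => a b; rewrite cj_snoc /=.
  case: (boolP (cj C a b)) => //= /existsPn H.
  have Hle : le_tup [ffun j => circ_vals C a (args j)] [ffun j => circ_vals C b (args j)].
    by apply/forallP => j; rewrite !ffunE leqNgt; apply: H.
  by have := okg _ _ Hle; rewrite leqNgt => /negbTE ->.
set h := fun a : tup k n => [ffun j => circ_vals C a (args j)].
have Hseg := @seg _ _ (@le_tup k n) (@le_tup k (kf_ar w)) (cj C) h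
  (fun u => nat_of_ord (kf_fn w u)) (dB B).
have H1 : forall a b, le_tup a b -> ~~ cj C a b -> le_tup (h a) (h b).
  move=> a b _ /existsPn H; apply/forallP => j; rewrite !ffunE leqNgt; exact: H.
have H2 : forall x0 r, path (@le_tup k (kf_ar w)) x0 r ->
    jc (fun a b => kf_fn w b < kf_fn w a) x0 r <= dB B.
  move=> x0 r Hr; apply: leq_trans (dB_ge okg); exact: dd_dsys.
have := Hseg H1 H2 s x (h x) [::] Hp isT erefl; rewrite /= add0n.
rewrite (@jc_ext _ (cj (CSnoc C (GOm (w:=w) args))) (fun a b => cj C a b || (kf_fn w (h b) < kf_fn w (h a)))); last first.
  by move=> a b; rewrite cj_snoc.
move=> H; apply: leq_trans H _; rewrite addn1 expnSr leq_mul2r.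
by rewrite IH ?orbT.
Qed.

Lemma jump_cj k n (F : seq (tup k n -> 'I_k)) m (C : circuit k n m) a b :
  realizes C F -> is_jump F a b -> cj C a b.
Proof.
rewrite /realizes /is_jump; elim: F => [|f F IH] //= HR /orP[Hf|HF].
  have [i Hi] := HR f (or_introl erefl); apply/existsP; exists i; by rewrite !Hi.
by apply: IH => // f' Hin; apply: HR; right.
Qed.

Theorem lemma1 (k : nat) (B : seq (kfun k)) (n : nat)
    (F : seq (tup k n -> 'I_k)) (i : nat) :
  2 <= k ->
  0 < size B ->
  (forall w, List.In w B -> ~ mono (kf_fn w)) ->
  0 < n ->
  IB B F i ->
  dsys F <= (dB B + 1) ^ i - 1.
Proof.
move=> _ _ _ _ [[m [C [okC realC wC]]] _].
apply/bigmax_leqP => l _; apply/bigmax_leqP => t /andP[_].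
case: t => [[|x s] /= _] Hp; rewrite ?decr_jc; first by [].
have H := main okC Hp; rewrite wC addn1 in H *.
have := jc_mono x s (fun a b => @jump_cj k n F m C a b realC).
move=> H2; apply: leq_trans H2 _; rewrite subn1 -ltnS prednK //; exact: leq_ltn_trans (leq0n _) H.
Qed.
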